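(* Let $W$ be an arbitrary quantum walk on $\ell^2(\mathbb{Z})\otimes\mathbb{C}^2$ and $k\in\mathbb{N}$. Then $v(W^k)=k\,v(W)$.
   Context: $\ell^2(\mathbb{Z})\otimes\mathbb{C}^2$ has basis $\delta_j^\pm=\delta_j\otimes e_\pm$. State-dependent shifts: $S_\pm=T^{\pm1}\otimes P_\pm+\mathbb{1}\otimes P_\mp$, where $T\delta_j=\delta_{j+1}$ and $P_\pm$ are the projections onto $e_+=(1,0)^\top$, $e_-=(0,1)^\top$. A coin operator acts as $C(\delta_j\otimes v)=\delta_j\otimes C(j)v$ with $C(j)$ unitary $2\times2$ matrices. A quantum walk is a finite product of shift operators $S_\pm$ and coin operators. $Q\delta_j^\pm=j\delta_j^\pm$ is the position operator. For a walk $W$ and normalized $\psi\in\mathrm{dom}(Q)$, $v(W,\psi)=\limsup_{t\to\infty,\,t\in\mathbb{N}}\frac1t\|QW^t\psi\|$, and $v(W)=\sup\{v(W,\psi):\psi\in\mathrm{dom}(Q),\|\psi\|=1\}$. *)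

(* Defs.v *)
From HB Require Import structures.
From mathcomp Require Import all_boot all_order all_algebra.
From mathcomp Require Import complex.
From mathcomp Require Import all_classical all_reals all_analysis.
Set Implicit Arguments. Unset Strict Implicit. Unset Printing Implicit Defensive.
Import Order.TTheory GRing.Theory Num.Theory.
Local Open Scope ring_scope.
Local Open Scope classical_set_scope.

Section QW.
Variable R : realType.
Local Notation C := (R[i]).

(* A (not necessarily square-summable) vector-valued sequence: psi j is the
   column vector (psi(j)_+, psi(j)_-) in C^2; index 0 = e_+, index 1 = e_-.
   Elements of l^2(Z) (x) C^2 are those with finite l2_norm2. *)
Definition state := int -> 'cV[C]_2.

Definition ep : 'I_2 := ord0.
Definition em : 'I_2 := ord_max.

Definition cabs2 (z : C) : R := (complex.Re z) ^+ 2 + (complex.Im z) ^+ 2.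

Definition vabs2 (v : 'cV[C]_2) : R := cabs2 (v ep 0) + cabs2 (v em 0).

Definition l2_norm2 (psi : state) : \bar R :=
  \esum_(j in [set: int]) (vabs2 (psi j))%:E.
Definition Q_norm2 (psi : state) : \bar R :=
  \esum_(j in [set: int]) ((j%:~R : R) ^+ 2 * vabs2 (psi j))%:E.

Definition esqrt (x : \bar R) : \bar R :=
  match x with
  | EFin r => (Num.sqrt r)%:E
  | EPInf => +oo%E
  | ENInf => 0%E
  end.

Definition normalized_domQ (psi : state) : Prop :=
  l2_norm2 psi = 1%E /\ (Q_norm2 psi < +oo)%E.

Definition adjmx (A : 'M[C]_2) : 'M[C]_2 := (map_mx (@conjc R) A)^T.
Definition unitary_mx (A : 'M[C]_2) : Prop :=
  A *m adjmx A = 1%:M /\ adjmx A *m A = 1%:M.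

Inductive step :=
| Splus                     (* S_+ = T (x) P_+ + 1 (x) P_- *)
| Sminus                    (* S_- = T^-1 (x) P_- + 1 (x) P_+ *)
| Coin of (int -> 'M[C]_2). (* C (delta_j (x) v) = delta_j (x) C(j) v *)

Definition step_ok (s : step) : Prop :=
  match s with Coin c => forall j, unitary_mx (c j) | _ => True end.

(* (T f)(j) = f(j-1), since T delta_j = delta_(j+1) *)
Definition step_act (s : step) (psi : state) : state :=
  match s with
  | Splus => fun j => \col_(i < 2) (if i == ep then psi (j - 1) i 0 else psi j i 0)
  | Sminus => fun j => \col_(i < 2) (if i == em then psi (j + 1) i 0 else psi j i 0)
  | Coin c => fun j => c j *m psi j
  end.

(* a quantum walk: a finite product [:: A1; ...; An] = A1 A2 ... An *)
Definition walk := seq step.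
Definition walk_ok (W : walk) : Prop := foldr (fun s P => step_ok s /\ P) True W.

Definition walk_act (W : walk) (psi : state) : state :=
  foldr step_act psi W.

Definition walk_pow (W : walk) (k : nat) : walk := flatten (nseq k W).

Definition velocity_at (W : walk) (psi : state) : \bar R :=
  limn_esup (fun t : nat => ((t%:R : R)^-1)%:E * esqrt (Q_norm2 (iter t (walk_act W) psi)))%E.

Definition velocity (W : walk) : \bar R :=
  ereal_sup [set velocity_at W psi | psi in normalized_domQ].

End QW.

(* Main.v *)
Require Import Defs.
From HB Require Import structures.
From mathcomp Require Import all_boot all_order all_algebra.
From mathcomp Require Import complex.
From mathcomp Require Import all_classical all_reals all_analysis.
From mathcomp Require Import ring lra.
Import Order.TTheory GRing.Theory Num.Theory.
Local Open Scope ring_scope.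

Section B.
Lemma cabs2_ge0 (R : realType) (z : R[i]) : (0 <= cabs2 z)%R.
Proof. by rewrite /cabs2 addr_ge0 // sqr_ge0. Qed.
Lemma vabs2_ge0 (R : realType) (v : 'cV[R[i]]_2) : (0 <= vabs2 v)%R.
Proof. by rewrite /vabs2 addr_ge0 // cabs2_ge0. Qed.

Variable R : realType.
Local Notation C := (R[i]).

Lemma key_ineq (x e a b : R) : 0 < e -> 0 <= a -> 0 <= b ->
  (x+1)^+2 * a + x^+2 * b <= (1+e) * (x^+2 * (a+b)) + (1+e^-1) * (a+b).
Proof.
move=> e0 a0 b0; set d := e^-1.
have ed : e * d = 1 by rewrite /d mulfV // gt_eqF.
have d0 : 0 < d by rewrite /d invr_gt0.
have h : 2 * x <= e * x^+2 + d.
  have : 0 <= e * (e * x^+2 + d - 2 * x).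
    have -> : e * (e * x^+2 + d - 2 * x) = (e * x - 1)^+2.
      apply/eqP; rewrite -subr_eq0.
      have -> : e * (e * x^+2 + d - 2 * x) - (e * x - 1)^+2 = e * d - 1 by ring.
      by rewrite ed subrr.
    exact: sqr_ge0.
  by rewrite pmulr_rge0 // subr_ge0.
have hx : 0 <= x^+2 by exact: sqr_ge0.
set K := (1 + e) * x^+2 + (1 + d).
have h1 : (x+1)^+2 <= K.
  have -> : (x+1)^+2 = x^+2 + 2 * x + 1 by ring.
  rewrite /K; lra.
have h2 : x^+2 <= K by rewrite /K; nra.
have -> : (1+e) * (x^+2 * (a+b)) + (1+d) * (a+b) = K * a + K * b by rewrite /K; ring.
by apply: lerD; apply: ler_wpM2r.
Qed.

Lemma vabs2_Splus (psi : state R) (j : int) :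
  vabs2 (step_act (@Splus R) psi j) = cabs2 (psi (j - 1)%R ep 0) + cabs2 (psi j em 0).
Proof. by rewrite /vabs2 /= !mxE eqxx. Qed.

Lemma vabs2_Sminus (psi : state R) (j : int) :
  vabs2 (step_act (@Sminus R) psi j) = cabs2 (psi j ep 0) + cabs2 (psi (j + 1)%R em 0).
Proof. by rewrite /vabs2 /= !mxE eqxx. Qed.
Local Open Scope ereal_scope.
Lemma EFin_ge0 (x : R) : (0 <= x)%R -> (0 : \bar R) <= x%:E.
Proof. by move=> h; rewrite lee_fin. Qed.
Lemma esumZ (c : R) (a : int -> \bar R) : (0 < c)%R -> (forall j, 0 <= a j) ->
  \esum_(j in [set: int]) (c%:E * a j) = c%:E * \esum_(j in [set: int]) a j.
Proof.
move=> c0 a0; rewrite /esum -ereal_sup_pZl //; congr ereal_sup.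
rewrite image_comp; apply: eq_imagel => X _ /=.
by rewrite ge0_mule_fsumr.
Qed.
Lemma esum_shift (f : int -> \bar R) (d : int) :
  \esum_(j in [set: int]) f (j + d)%R = \esum_(j in [set: int]) f j.
Proof.
symmetry; apply: (@reindex_esum R int int setT setT (fun j => (j + d)%R)).
rewrite setTT_bijective; exists (fun x => (x - d)%R) => x; [exact: addrK | exact: subrK].
Qed.

Lemma test (j : int) : ((j + -1)%:~R + 1 = j%:~R :> R)%R.
Proof. by rewrite intrD addrNK. Qed.

Lemma N_Splus (psi : state R) : l2_norm2 (step_act (@Splus R) psi) = l2_norm2 psi.
Proof.
rewrite /l2_norm2; under eq_esum => j _ do rewrite vabs2_Splus EFinD.
rewrite esumD; last 2 first.
  by move=> j _; apply: EFin_ge0; exact: cabs2_ge0.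
  by move=> j _; apply: EFin_ge0; exact: cabs2_ge0.
rewrite (esum_shift (fun j => (cabs2 (psi j ep 0))%:E) (-1)) -esumD; last 2 first.
  by move=> j _; apply: EFin_ge0; exact: cabs2_ge0.
  by move=> j _; apply: EFin_ge0; exact: cabs2_ge0.
by apply: eq_esum => j _; rewrite /vabs2 EFinD.
Qed.

Ltac pos := repeat first [done | apply: ltr01 | apply: addr_gt0 | rewrite invr_gt0].
Ltac nn := move=> *; apply: EFin_ge0; repeat first [ done | apply: sqr_ge0 | apply: cabs2_ge0 | apply: vabs2_ge0 | apply: mulr_ge0 | apply: addr_ge0 | rewrite invr_ge0 | apply: ler01 | apply: ltW | rewrite invr_gt0 ].

Lemma N_Sminus (psi : state R) : l2_norm2 (step_act (@Sminus R) psi) = l2_norm2 psi.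
Proof.
rewrite /l2_norm2; under eq_esum => j _ do rewrite vabs2_Sminus EFinD.
rewrite esumD; [|nn|nn].
rewrite (esum_shift (fun j => (cabs2 (psi j em 0))%:E) 1) -esumD; [|nn|nn].
by apply: eq_esum => j _; rewrite /vabs2 EFinD.
Qed.

Lemma M_Splus (psi : state R) (e : R) : (0 < e)%R ->
  Q_norm2 (step_act (@Splus R) psi) <=
  (1 + e)%:E * Q_norm2 psi + (1 + e^-1)%:E * l2_norm2 psi.
Proof.
move=> e0; rewrite /Q_norm2 /l2_norm2.
under eq_esum => j _ do rewrite vabs2_Splus mulrDr EFinD.
rewrite esumD; [|nn|nn].
have -> : \esum_(j in [set: int]) ((j%:~R:R)^+2 * cabs2 (psi (j - 1)%R ep 0))%:E =
   \esum_(j in [set: int]) (((j%:~R:R)+1)^+2 * cabs2 (psi j ep 0))%:E.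
  rewrite -(esum_shift (fun j => (((j%:~R:R)+1)^+2 * cabs2 (psi j ep 0))%:E) (-1)).
  by apply: eq_esum => j _ /=; rewrite intrD addrNK.
rewrite -esumD; [|nn|nn].
rewrite -esumZ; [|pos|nn].
rewrite -esumZ; [|pos|nn].
rewrite -esumD; [|nn|nn].
apply: le_esum => j _; rewrite -!EFinM -EFinD lee_fin /vabs2.
by apply: key_ineq => //; apply: cabs2_ge0.
Qed.

Lemma M_Sminus (psi : state R) (e : R) : (0 < e)%R ->
  Q_norm2 (step_act (@Sminus R) psi) <=
  (1 + e)%:E * Q_norm2 psi + (1 + e^-1)%:E * l2_norm2 psi.
Proof.
move=> e0; rewrite /Q_norm2 /l2_norm2.
under eq_esum => j _ do rewrite vabs2_Sminus mulrDr EFinD.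
rewrite esumD; [|nn|nn].
have -> : \esum_(j in [set: int]) ((j%:~R:R)^+2 * cabs2 (psi (j + 1)%R em 0))%:E =
   \esum_(j in [set: int]) (((j%:~R:R)-1)^+2 * cabs2 (psi j em 0))%:E.
  rewrite -(esum_shift (fun j => (((j%:~R:R)-1)^+2 * cabs2 (psi j em 0))%:E) 1).
  by apply: eq_esum => j _ /=; rewrite intrD addrK.
rewrite addeC -esumD; [|nn|nn].
rewrite -esumZ; [|pos|nn].
rewrite -esumZ; [|pos|nn].
rewrite -esumD; [|nn|nn].
apply: le_esum => j _; rewrite -!EFinM -EFinD lee_fin /vabs2.
have := key_ineq (- (j%:~R)) e (cabs2 (psi j em 0%R)) (cabs2 (psi j ep 0%R)) e0 (cabs2_ge0 _ _) (cabs2_ge0 _ _).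
have E1 : ((- (j%:~R:R) + 1)^+2 = (j%:~R - 1)^+2)%R by ring.
rewrite E1 sqrrN; lra.
Qed.

Local Close Scope ereal_scope.
Local Open Scope complex_scope.
Lemma cabs2E (z : C) : (cabs2 z)%:C = (z^*)%C * z.
Proof.
case: z => a b; rewrite /cabs2 /=.
apply/eqP; rewrite eq_complex /=; apply/andP; split; apply/eqP; ring.
Qed.

Definition hv (v : 'cV[C]_2) : C := (((map_mx conjc v)^T) *m v) 0 0.

Lemma hvE v : hv v = (vabs2 v)%:C.
Proof.
rewrite /hv mxE big_ord_recr big_ord_recr big_ord0 /= add0r !mxE.
rewrite /vabs2 rmorphD /= !cabs2E.
have -> : widen_ord (leqnSn 1) ord_max = ep by apply/val_inj.
by [].
Qed.

Lemma vabs2_unitary (U : 'M[C]_2) v : unitary_mx U -> vabs2 (U *m v) = vabs2 v.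
Proof.
move=> [_ HU]; apply: complexI; rewrite -!hvE /hv.
rewrite map_mxM trmx_mul -mulmxA (mulmxA _ U) .
have -> : (map_mx conjc U)^T *m U = 1%:M by exact: HU.
by rewrite mul1mx.
Qed.

Local Close Scope complex_scope.
Local Open Scope ereal_scope.
Lemma real_step (F G c k x K e : R) : (0 < x)%R -> (0 < K)%R -> (K <= x)%R -> (0 <= G)%R ->
  (F <= G + c * k)%R -> (0 < e)%R -> (c * k / e < x)%R ->
  (x^-1 * F <= K^-1 * G + e)%R.
Proof.
move=> x0 K0 Kx G0 FG e0 ckx.
have h1 : (x^-1 * F <= x^-1 * G + x^-1 * (c * k))%R.
  by rewrite -mulrDr ler_wpM2l // invr_ge0 ltW.
apply: (le_trans h1); apply: lerD.
  by apply: ler_wpM2r => //; rewrite lef_pV2 ?posrE.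
rewrite mulrC ler_pdivrMr //.
by move: ckx; rewrite ltr_pdivrMr // [(x * e)%R]mulrC => /ltW.
Qed.

Lemma limsup_scale (k : R) (u : nat -> \bar R) : (0 < k)%R ->
  limn_esup (fun n => k%:E * u n) = k%:E * limn_esup u.
Proof.
move=> k0; rewrite /limn_esup !limf_esupE -ereal_inf_pZl //.
congr ereal_inf; rewrite image_comp; apply: eq_imagel => V _ /=.
by rewrite -ereal_sup_pZl // image_comp.
Qed.

Lemma limn_esup_inf (u : nat -> \bar R) :
  limn_esup u = ereal_inf (range (esups u)).
Proof. by rewrite limn_esup_lim; apply: cvg_lim => //; exact: cvg_esups_inf. Qed.

Lemma limsup_le (u v : nat -> \bar R) :
  (forall e : R, (0 < e)%R -> forall N, exists N', forall n, (N' <= n)%N ->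
     exists2 m, (N <= m)%N & u n <= v m + e%:E) ->
  limn_esup u <= limn_esup v.
Proof.
move=> H; apply/lee_addgt0Pr => e e0.
rewrite -leeBlDr // [X in _ <= X]limn_esup_inf.
apply: le_ereal_inf_tmp => _ [N _ <-].
have [N' HN'] := H e e0 N.
rewrite leeBlDr // limn_esup_inf.
apply: (le_trans (ereal_inf_lbound _)); first by exists N'.
apply: ge_ereal_sup => _ [n /= Nn <-].
have [m Nm um] := HN' n Nn.
apply: (le_trans um); rewrite leeD2r //.
by apply: ereal_sup_ubound; exists m.
Qed.

Lemma seq_claim (f : nat -> R) (c : R) (k : nat) : (0 <= c)%R ->
  (forall n, 0 <= f n)%R -> (forall n, f n.+1 <= f n + c)%R -> (0 < k)%N ->
  limn_esup (fun t => ((t%:R)^-1 * f (k * t)%N)%:E) =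
  (k%:R)%:E * limn_esup (fun t => ((t%:R)^-1 * f t)%:E).
Proof.
move=> c0 f0 fS k0.
have fb : forall t d, (f (t + d)%N <= f t + c * d%:R)%R.
  move=> t; elim=> [|d IH]; first by rewrite addn0 mulr0 addr0.
  rewrite addnS -natr1 mulrDr mulr1 addrA.
  by apply: (le_trans (fS _)); rewrite lerD2r.
have kR : (0 < k%:R :> R)%R by rewrite ltr0n.
have -> : (fun t => ((t%:R)^-1 * f (k * t)%N)%:E) =
    (fun t => (k%:R)%:E * (((k * t)%N%:R)^-1 * f (k * t)%N)%:E).
  apply: funext => t; rewrite -EFinM; congr EFin.
  rewrite natrM invfM !mulrA mulfV ?mul1r //.
  by rewrite gt_eqF.
rewrite limsup_scale //; congr (_ * _).
apply/eqP; rewrite eq_le; apply/andP; split; apply: limsup_le => e e0 N.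
  exists N => n Nn; exists (k * n)%N.
    by apply: (leq_trans Nn); rewrite leq_pmull.
  by apply: leeDl; rewrite lee_fin ltW.
exists (k * N.+1 + Num.Def.trunc (c * k%:R / e)).+1%N => n Hn.
exists (n %/ k)%N.
  have : (N.+1 <= n %/ k)%N.
    by rewrite leq_divRL // mulnC; apply: (leq_trans _ (ltnW Hn)); rewrite leq_addr.
  exact: ltnW.
rewrite -EFinD lee_fin.
set m := (n %/ k)%N.
have Hm : (N.+1 <= m)%N.
  by rewrite leq_divRL // mulnC; apply: (leq_trans _ (ltnW Hn)); rewrite leq_addr.
have km : (k * m <= n)%N by rewrite mulnC leq_trunc_div.
have ndec : n = (k * m + n %% k)%N by rewrite mulnC -divn_eq.
apply: (@real_step _ _ c (k%:R)).
- by rewrite ltr0n; apply: leq_trans Hn.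
- by rewrite ltr0n muln_gt0 k0; apply: leq_trans Hm.
- by rewrite ler_nat.
- exact: f0.
- rewrite [in X in (f X <= _)%R]ndec; apply: (le_trans (fb _ _)).
  rewrite lerD2l; apply: ler_wpM2l => //; rewrite ler_nat; apply: ltnW; exact: ltn_pmod.
- exact: e0.
- apply: (lt_le_trans (truncnS_gt _)); rewrite ler_nat.
  by apply: leq_trans _ Hn; rewrite ltnS leq_addl.
Qed.
Lemma l2_ge0 (psi : state R) : 0 <= l2_norm2 psi.
Proof. by apply: esum_ge0 => j _; rewrite lee_fin vabs2_ge0. Qed.

Lemma Q_ge0 (psi : state R) : 0 <= Q_norm2 psi.
Proof. by apply: esum_ge0 => j _; rewrite lee_fin mulr_ge0 ?sqr_ge0 ?vabs2_ge0. Qed.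

Lemma step_NM (s : step R) (psi : state R) (e : R) : step_ok s -> (0 < e)%R ->
  l2_norm2 (step_act s psi) = l2_norm2 psi /\
  Q_norm2 (step_act s psi) <= (1 + e)%:E * Q_norm2 psi + (1 + e^-1)%:E * l2_norm2 psi.
Proof.
move=> hs e0; case: s hs => [_|_|c hc].
- by split; [exact: N_Splus | exact: M_Splus].
- by split; [exact: N_Sminus | exact: M_Sminus].
have hv : forall j, vabs2 (step_act (Coin c) psi j) = vabs2 (psi j).
  by move=> j; rewrite /= vabs2_unitary.
have -> : l2_norm2 (step_act (Coin c) psi) = l2_norm2 psi.
  by apply: eq_esum => j _; rewrite hv.
have -> : Q_norm2 (step_act (Coin c) psi) = Q_norm2 psi.
  by apply: eq_esum => j _; rewrite hv.
split => //.
apply: (le_trans _ (leeDl _ _)).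
  apply: lee_pemull; first exact: Q_ge0.
  by rewrite lee_fin lerDl ltW.
apply: mule_ge0; last exact: l2_ge0.
by rewrite lee_fin addr_ge0 // invr_ge0 ltW.
Qed.

Definition qv (psi : state R) : R := Num.sqrt (fine (Q_norm2 psi)).

Lemma sqrt_bound (x y : R) : (0 <= x)%R ->
  (y <= (1 + (Num.sqrt x + 1)^-1) * x + (1 + (Num.sqrt x + 1)^-1^-1))%R ->
  (Num.sqrt y <= Num.sqrt x + 2)%R.
Proof.
move=> x0; set r := Num.sqrt x; rewrite invrK.
have r0 : (0 <= r)%R by exact: sqrtr_ge0.
have xr : x = (r ^+ 2)%R by rewrite sqr_sqrtr.
move=> hy.
have h1 : ((r + 1)^-1 * x <= r)%R.
  rewrite xr mulrC ler_pdivrMr; last lra.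
  rewrite expr2 ler_wpM2l //; lra.
have : (y <= (r + 2) ^+ 2)%R.
  rewrite xr mulrDl mul1r in hy h1.
  nra.
move=> /ler_wsqrtr; rewrite sqrtr_sqr ger0_norm //; lra.
Qed.

Lemma fin_of (x : \bar R) : 0 <= x -> x < +oo -> x = (fine x)%:E.
Proof. by move=> h1 h2; rewrite fineK // ge0_fin_numE. Qed.

Lemma step_good (s : step R) (psi : state R) : step_ok s ->
  normalized_domQ psi ->
  normalized_domQ (step_act s psi) /\ (qv (step_act s psi) <= qv psi + 2)%R.
Proof.
move=> hs [N1 Mfin].
set x := fine (Q_norm2 psi).
have Mx : Q_norm2 psi = x%:E by exact: fin_of (Q_ge0 _) Mfin.
have x0 : (0 <= x)%R by rewrite -lee_fin -Mx Q_ge0.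
set e := ((Num.sqrt x + 1)^-1)%R.
have e0 : (0 < e)%R by rewrite invr_gt0 ltr_wpDl // sqrtr_ge0.
have [HN HM] := step_NM s psi e hs e0.
rewrite N1 Mx -!EFinM -EFinD mulr1 in HM.
have Mfin' : Q_norm2 (step_act s psi) < +oo by apply: le_lt_trans HM (ltry _).
split; first by split => //; rewrite HN.
rewrite /qv -/x; apply: sqrt_bound => //.
by rewrite -lee_fin -fin_of // Q_ge0.
Qed.

Lemma walk_good (W : walk R) (psi : state R) : walk_ok W ->
  normalized_domQ psi ->
  normalized_domQ (walk_act W psi) /\
  (qv (walk_act W psi) <= qv psi + 2 * (size W)%:R)%R.
Proof.
elim: W => [|s W IH] /=; first by move=> _ h; split => //; rewrite mulr0 addr0.
move=> [hs hW] hpsi.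
have [h1 h2] := IH hW hpsi.
have [h3 h4] := step_good s _ hs h1.
split => //; apply: (le_trans h4).
have -> : ((size W).+1%:R = (size W)%:R + 1 :> R)%R by rewrite natr1.
lra.
Qed.


Lemma walk_act_cat (W1 W2 : walk R) psi :
  walk_act (W1 ++ W2) psi = walk_act W1 (walk_act W2 psi).
Proof. by rewrite /walk_act foldr_cat. Qed.

Lemma walk_pow_act (W : walk R) k psi :
  walk_act (walk_pow W k) psi = iter k (walk_act W) psi.
Proof.
elim: k => [//|k IH] /=.
by rewrite /walk_pow /= walk_act_cat -/(walk_pow W k) IH.
Qed.

Lemma iter_pow (W : walk R) k t psi :
  iter t (walk_act (walk_pow W k)) psi = iter (k * t) (walk_act W) psi.
Proof.
elim: t => [|t IH]; first by rewrite muln0.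
by rewrite /= IH walk_pow_act mulnS iterD.
Qed.

Lemma orbit_good (W : walk R) psi t : walk_ok W -> normalized_domQ psi ->
  normalized_domQ (iter t (walk_act W) psi).
Proof.
move=> hW hpsi; elim: t => [//|t IH] /=.
by have [] := walk_good W (iter t (walk_act W) psi) hW IH.
Qed.

Lemma esqrt_qv (phi : state R) : normalized_domQ phi ->
  esqrt (Q_norm2 phi) = (qv phi)%:E.
Proof. by move=> [_ Mfin]; rewrite {1}(fin_of _ (Q_ge0 phi) Mfin). Qed.

Lemma vel_at_pow (W : walk R) k psi : walk_ok W -> normalized_domQ psi ->
  velocity_at (walk_pow W k) psi =
  limn_esup (fun t => ((t%:R)^-1 * qv (iter (k * t) (walk_act W) psi))%:E).
Proof.
move=> hW hpsi; rewrite /velocity_at; congr limn_esup; apply: funext => t.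
by rewrite iter_pow esqrt_qv ?EFinM //; apply: orbit_good.
Qed.

Lemma vel_at1 (W : walk R) psi : walk_ok W -> normalized_domQ psi ->
  velocity_at W psi =
  limn_esup (fun t => ((t%:R)^-1 * qv (iter t (walk_act W) psi))%:E).
Proof.
move=> hW hpsi; rewrite /velocity_at; congr limn_esup; apply: funext => t.
by rewrite esqrt_qv ?EFinM //; apply: orbit_good.
Qed.

Lemma lim_zero (a : R) : (0 <= a)%R ->
  limn_esup (fun t => ((t%:R)^-1 * a)%:E) = 0.
Proof.
move=> a0.
have L0 : limn_esup (fun _ : nat => (0 : \bar R)) = 0.
  exact: (cvg_limn_einf_sup (cvg_cst (0 : \bar R))).2.
apply/eqP; rewrite eq_le; apply/andP; split.
  rewrite -[X in _ <= X]L0; apply: limsup_le => e e0 N.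
  exists (N + Num.Def.trunc (a * 1 / e)).+1 => n Hn; exists n.
    by apply: leq_trans (ltnW Hn); rewrite leq_addr.
  have Hn' : (Num.Def.trunc (a * 1 / e) < n)%N.
    by apply: leq_trans Hn; rewrite ltnS leq_addl.
  rewrite add0r lee_fin.
  have := @real_step a 0 a 1 n%:R n%:R e.
  have hn0 : (0 < n%:R :> R)%R by rewrite ltr0n; apply: leq_trans _ Hn'.
  rewrite mulr0 !add0r; apply => //.
    by rewrite mulr1.
  by apply: (lt_le_trans (truncnS_gt _)); rewrite ler_nat.
rewrite -[X in X <= _]L0; apply: limsup_le => e e0 N.
exists N => n Hn; exists n => //.
rewrite -EFinD lee_fin addr_ge0 ?mulr_ge0 ?invr_ge0 //; exact: ltW.
Qed.

Local Close Scope ereal_scope.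
Definition psi0 : state R :=
  fun j => if j == 0%R then \col_(i < 2) (if i == ep then 1%R else 0%R) else 0%R.

Lemma cabs2_0 : cabs2 (0 : R[i]) = 0%R.
Proof. by rewrite /cabs2 /= expr0n /= addr0. Qed.

Lemma cabs2_1 : cabs2 (1 : R[i]) = 1%R.
Proof. by rewrite /cabs2 /= expr0n /= addr0 expr1n. Qed.

Definition ind0 (j : int) : \bar R := if j \in [set (0:int)]%classic then 1%:E else 0%:E.
Local Open Scope ereal_scope.
Lemma psi0_norm : normalized_domQ psi0.
Proof.
split.
  rewrite /l2_norm2 (eq_esum (b := ind0)).
    by rewrite /ind0 -esum_mkcond esum_set1.
  move=> j _; rewrite /psi0 /ind0; case: (eqVneq j 0%R) => [->|jn0].
    by rewrite mem_set // /vabs2 !mxE /= cabs2_1 cabs2_0 addr0.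
  rewrite memNset; last by move=> /= h; rewrite h eqxx in jn0.
  by rewrite /vabs2 !mxE cabs2_0 addr0.
rewrite /Q_norm2 esum1 ?ltry // => j _.
rewrite /psi0; case: (eqVneq j 0%R) => [->|jn0].
  by rewrite expr0n /= mul0r.
by rewrite /vabs2 !mxE cabs2_0 addr0 mulr0.
Qed.
End B.

Theorem lemma3p6 (R : realType) (W : walk R) (k : nat) :
  walk_ok W ->
  velocity (walk_pow W k) = ((k%:R : R)%:E * velocity W)%E.
Proof.
move=> hW.
have HV : forall psi, normalized_domQ psi ->
    velocity_at (walk_pow W k) psi = ((k%:R : R)%:E * velocity_at W psi)%E.
  move=> psi hpsi; rewrite vel_at_pow // vel_at1 //.
  case: (posnP k) => [->|k0].
    rewrite mul0e.
    have -> : (fun t => ((t%:R)^-1 * qv R (iter (0 * t) (walk_act W) psi))%:E) =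
              (fun t => ((t%:R)^-1 * qv R psi)%:E :> \bar R).
      by apply: funext => t; rewrite mul0n.
    by rewrite lim_zero // sqrtr_ge0.
  apply: (@seq_claim R _ (2 * (size W)%:R)) => //.
  - by move=> n; exact: sqrtr_ge0.
  - move=> n /=.
    by have [] := walk_good R W (iter n (walk_act W) psi) hW (orbit_good R W psi n hW hpsi).
rewrite /velocity.
have -> : [set velocity_at (walk_pow W k) psi | psi in @normalized_domQ R]%classic =
   [set ((k%:R : R)%:E * x)%E | x in [set velocity_at W psi | psi in @normalized_domQ R]]%classic.
  by rewrite image_comp; apply: eq_imagel => psi hpsi; rewrite HV.
rewrite ereal_supZl //.
apply/set0P; exists (velocity_at W (psi0 R)); exists (psi0 R) => //.
exact: psi0_norm.
Qed.
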